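(* Let $d\ge1$ and $\lambda=(\lambda_1,\dots,\lambda_d)$ a vector of positive integers with $\sum_t\lambda_t=n\ge2$. If $i\preceq j$ in $P(\lambda)$ (with $i,j\in\{0,\dots,n-2\}$), then also $j-i\preceq j$ in $P(\lambda)$.
   Context: $\Delta_\lambda=\mathrm{conv}(e_1,\dots,e_d,\lambda)\subset\mathbb{R}^d$, with fundamental parallelepiped $\Pi_\lambda=\{\sum_{i=1}^d\gamma_i(1,e_i)+\gamma_{d+1}(1,\lambda):0\le\gamma_i<1\}\subset\mathbb{R}^{d+1}$. The poset $P(\lambda)$ is the set $\Pi_\lambda\cap\mathbb{Z}^{d+1}$ ordered by $\sigma\preceq\mu$ iff $\mu-\sigma\in\Pi_\lambda\cap\mathbb{Z}^{d+1}$ (a reflexive relation). For $0\le b<n-1$ set $p(b)=\left(\sum_{t=1}^d\lceil b\lambda_t/(n-1)\rceil-b,\ \lceil b\lambda_1/(n-1)\rceil,\dots,\lceil b\lambda_d/(n-1)\rceil\right)$; $b\mapsto p(b)$ is a bijection from $\{0,\dots,n-2\}$ onto $\Pi_\lambda\cap\mathbb{Z}^{d+1}$, and each integer $b$ is identified with $p(b)$, so $P(\lambda)$ is a partial order on $\{0,\dots,n-2\}$. *)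

(* Defs.v *)
From HB Require Import structures.
From mathcomp Require Import all_boot all_order all_algebra.
From mathcomp Require Import reals.
Set Implicit Arguments. Unset Strict Implicit. Unset Printing Implicit Defensive.
Import Order.TTheory GRing.Theory Num.Theory.
Local Open Scope ring_scope.

(* lam : 'I_d -> nat is the vector (lambda_1,...,lambda_d);
   vectors of R^{d+1} / Z^{d+1} are functions 'I_d.+1 -> _, coordinate ord0
   being the first ("height") coordinate and coordinate (lift ord0 t) being
   the (t+1)-th one. *)

Definition lamsum (d : nat) (lam : 'I_d -> nat) : nat := (\sum_(t < d) lam t)%N.

Definition inPi (R : realType) (d : nat) (lam : 'I_d -> nat)
    (v : 'I_d.+1 -> int) : Prop :=
  exists (g : 'I_d -> R) (g' : R),
    (forall t, 0 <= g t < 1) /\ (0 <= g' < 1) /\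
    (v ord0)%:~R = \sum_(t < d) g t + g' /\
    (forall t : 'I_d, (v (lift ord0 t))%:~R = g t + g' * (lam t)%:R).

Definition cl (R : realType) (d : nat) (lam : 'I_d -> nat) (b : nat) (t : 'I_d) : int :=
  Num.ceil (((b * lam t)%N)%:R / ((lamsum lam).-1)%:R : R).

Definition pvec (R : realType) (d : nat) (lam : 'I_d -> nat) (b : nat)
    : 'I_d.+1 -> int :=
  fun k => match unlift ord0 k with
           | None => \sum_(t < d) cl R lam b t - b%:Z
           | Some t => cl R lam b t
           end.

(* sigma <= mu in P(lambda) iff mu - sigma lies in Pi_lambda ∩ Z^{d+1};
   the elements b of {0,...,n-2} are identified with p(b). *)
Definition Ple (R : realType) (d : nat) (lam : 'I_d -> nat) (i j : nat) : Prop :=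
  inPi R lam (fun k => pvec R lam j k - pvec R lam i k).

(* Main.v *)
Require Import Defs.
From HB Require Import structures.
From mathcomp Require Import all_boot all_order all_algebra.
From mathcomp Require Import reals.
From mathcomp Require Import ring lra zify.
Set Implicit Arguments. Unset Strict Implicit. Unset Printing Implicit Defensive.
Import Order.TTheory GRing.Theory Num.Theory.
Local Open Scope ring_scope.

Lemma pv0 (R : realType) d (lam : 'I_d -> nat) b :
  pvec R lam b ord0 = \sum_(t < d) cl R lam b t - b%:Z.
Proof. by rewrite /pvec unlift_none. Qed.

Lemma pvl (R : realType) d (lam : 'I_d -> nat) b t :
  pvec R lam b (lift ord0 t) = cl R lam b t.
Proof. by rewrite /pvec liftK. Qed.

Theorem proposition2p14 (R : realType) (d : nat) (lam : 'I_d -> nat) :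
  (0 < d)%N ->
  (forall t, 0 < lam t)%N ->
  (2 <= lamsum lam)%N ->
  forall i j : nat,
    (i < (lamsum lam).-1)%N -> (j < (lamsum lam).-1)%N ->
    Ple R lam i j -> Ple R lam (j - i) j.
Proof.
move=> d0 lpos n2 i j ilt jlt [g [g' [Hg [Hg' [H0 Ht]]]]].
rewrite !pv0 in H0.
have Ht' : forall t, ((cl R lam j t)%:~R - (cl R lam i t)%:~R : R) = g t + g' * (lam t)%:R.
  by move=> t; rewrite -Ht !pvl intrB.
set N := (lamsum lam).-1.
have NP : (0 < N%:R :> R) by rewrite ltr0n; rewrite /N; lia.
have eN : lamsum lam = N.+1 by rewrite /N; lia.
have Hn : ((lamsum lam)%:R : R) = N%:R + 1 by rewrite eN natr1.
have key : (j%:R - i%:R : R) = g' * N%:R.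
  have E1 : (\sum_(t < d) ((cl R lam j t)%:~R - (cl R lam i t)%:~R) : R)
            = \sum_(t < d) g t + g' * (lamsum lam)%:R.
    rewrite (eq_bigr _ (fun t _ => Ht' t)) big_split /= -mulr_sumr /lamsum.
    by rewrite natr_sum.
  move: H0; rewrite !(intrB, rmorph_sum) /= -!pmulrn => H0.
  rewrite sumrB Hn in E1.
  lra.
have gE : g' = (j%:R - i%:R) / N%:R by rewrite key mulfK // gt_eqF.
have ij : (i <= j)%N.
  rewrite -(ler_nat R).
  have : 0 <= g' * N%:R by apply: mulr_ge0; [case/andP: Hg' | exact: ltW].
  lra.
have N0 : (N%:R : R) != 0 by rewrite gt_eqF.
have iN : (i%:R : R) < N%:R by rewrite ltr_nat.
rewrite /Ple /inPi.
exists (fun t => (cl R lam j t)%:~R - (cl R lam (j - i) t)%:~R - (i * lam t)%N%:R / N%:R).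
exists (i%:R / N%:R).
split; [|split; [|split]].
- move=> t.
  have HA := Ht' t.
  have Hgt := Hg t.
  rewrite /cl in HA *.
  set A := (j * lam t)%N%:R / N%:R in HA *.
  set B := (i * lam t)%N%:R / N%:R in HA *.
  have CE : ((j - i) * lam t)%N%:R / N%:R = A - B :> R.
    rewrite /A /B mulnBl natrB ?leq_mul2r ?ij ?orbT // mulrBl //.
  have gl : g' * (lam t)%:R = A - B by rewrite gE /A /B !natrM; field.
  rewrite /N CE.
  rewrite -/N in HA *.
  have kE : Num.ceil (A - B) = Num.ceil A - Num.ceil B.
    apply: ceil_def; rewrite !intrB; apply/andP; split; lra.
  rewrite kE !intrB.
  have := ceil_itv B; rewrite intrB.
  move=> /andP [h1 h2]; apply/andP; split; lra.
- apply/andP; split; first by rewrite divr_ge0 ?ler0n.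
  by rewrite ltr_pdivrMr // mul1r.
- rewrite !pv0 !intrB !rmorph_sum /= -!pmulrn.
  rewrite big_split /= sumrB.
  have S : \sum_(t < d) ((i * lam t)%N%:R / N%:R : R) = i%:R + i%:R / N%:R.
    rewrite -mulr_suml -natr_sum -big_distrr /= -/(lamsum lam) natrM Hn.
    by field.
  rewrite sumrN S natrB //.
  lra.
- move=> t; rewrite !pvl intrB natrM; field; exact: N0.
Qed.
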